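(* Let $\mathcal{G}=(\mathcal{V},\mathcal{E})$ be an unweighted connected (finite, simple) graph, let $f:\mathcal{V}\to\mathbb{R}$ be a filtering function, and let $k\geq 1$ be an integer. Let $\mathcal{G}^{k+1}$ denote the $(k+1)$-core of $\mathcal{G}$, equipped with the restriction of $f$ to its vertex set (values not recomputed) and the same threshold set as $\mathcal{G}$. Then for every integer $j\geq k$, $$PD_j(\mathcal{G},f)=PD_j(\mathcal{G}^{k+1},f).$$
   Context: Graphs are finite, simple, undirected. For $f:\mathcal{V}\to\mathbb{R}$, let $\alpha_0<\alpha_1<\dots<\alpha_m$ be a threshold set with $\alpha_0=\min_{v\in \mathcal{V}} f(v)$ and $\alpha_m=\max_{v\in\mathcal{V}} f(v)$. For $0\le i\le m$, let $\mathcal{G}_i$ be the subgraph of $\mathcal{G}$ induced by $\mathcal{V}_i=\{v\in\mathcal{V}: f(v)\leq\alpha_i\}$, and let $\widehat{\mathcal{G}}_i$ be its clique (flag) complex: the simplicial complex whose $r$-simplices are the sets of $r+1$ pairwise adjacent vertices. The nested sequence $\widehat{\mathcal{G}}_0\subset\dots\subset\widehat{\mathcal{G}}_m$ is the sublevel filtration, and $PD_j(\mathcal{G},f)$ is the $j$-th persistence diagram of this filtration (the multiset of birth–death pairs of $j$-dimensional homology classes, homology with coefficients in a fixed field). For a subgraph $\mathcal{H}\subset\mathcal{G}$ with vertex set $\mathcal{W}\subset\mathcal{V}$, $PD_j(\mathcal{H},f)$ is defined the same way using $f|_{\mathcal{W}}$ and the same thresholds $\alpha_0,\dots,\alpha_m$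 (i.e. the $i$-th complex is the clique complex of the subgraph of $\mathcal{H}$ induced by $\{w\in\mathcal{W}: f(w)\le\alpha_i\}$). The $k$-core $\mathcal{G}^k$ of $\mathcal{G}$ is the subgraph obtained by iteratively deleting vertices (with their incident edges) of degree less than $k$; equivalently, the largest induced subgraph in which every vertex has degree at least $k$. *)

(* Defs.v *)
From mathcomp Require Import all_boot all_order all_algebra.
Set Implicit Arguments. Unset Strict Implicit. Unset Printing Implicit Defensive.
Import Order.TTheory GRing.Theory Num.Theory.
Local Open Scope ring_scope.

Section Defs.
Variables (T : finType) (e : rel T).

Definition clique (s : {set T}) : bool :=
  [forall u in s, forall v in s, (u != v) ==> e u v].

(* k-core: the largest vertex set W such that every vertex of W has at least
   k neighbours in W (union of all such sets, which is itself such a set). *)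
Definition kcore_ok (k : nat) (W : {set T}) : bool :=
  [forall v in W, (k <= #|[set u in W | e v u]|)%N].
Definition kcore (k : nat) : {set T} :=
  \bigcup_(W : {set T} | kcore_ok k W) W.

(* Indexing all vertex subsets by ordinals; chains are row vectors over F. *)
Definition Nsets := #|{: {set T}}|.
Definition sv (i : 'I_Nsets) : {set T} := enum_val i.

Variable F : fieldType.

(* Simplicial boundary matrix (rows = simplices, row s = boundary of s),
   w.r.t. the vertex order given by enum_rank.  Entry (s,t) is nonzero iff
   t = s minus one vertex v and t is nonempty (non-augmented complex); its sign
   is (-1)^(number of vertices of s below v). *)
Definition bd : 'M[F]_(Nsets, Nsets) :=
  \matrix_(i, j)
    let s := sv i in let t := sv j in
    if [&& t \subset s, #|s :\: t| == 1 & (0 < #|t|)%N] then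
      (-1) ^+ #|[set w in t | [exists u in s :\: t, (enum_rank w < enum_rank u)%N]]|
    else 0.

Variables (R : realFieldType) (f : T -> R) (alpha : nat -> R).

Definition inK (W : {set T}) (i : nat) (s : {set T}) : bool :=
  [&& s != set0, s \subset [set w in W | f w <= alpha i] & clique s].

Definition chains (W : {set T}) (r i : nat) :=
  \big[@addsmx F Nsets Nsets Nsets/(0 : 'M[F]_Nsets)]_(x : 'I_Nsets | (#|sv x| == r.+1) && inK W i (sv x))
      (<<@delta_mx F 1 Nsets ord0 x>>)%MS.

Definition cycles W r i := (chains W r i :&: kermx bd)%MS.
Definition bounds W r i := (chains W r.+1 i *m bd)%MS.

Definition pbetti W r a b : nat :=
  (\rank (cycles W r a) - \rank (cycles W r a :&: bounds W r b))%N.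

Definition pbetti_prev W r a b : nat :=
  if a is a'.+1 then pbetti W r a' b else 0%N.

Definition mult W r i l : nat :=
  ((pbetti W r i l.-1 + pbetti_prev W r i l)
   - (pbetti_prev W r i l.-1 + pbetti W r i l))%N.

Definition mult_inf (m : nat) W r i : nat :=
  (pbetti W r i m - pbetti_prev W r i m)%N.

(* r-th persistence diagram, as a multiset (seq up to permutation) of
   birth-death pairs; None stands for death at +infinity. *)
Definition PD (m : nat) (W : {set T}) (r : nat) : seq (R * option R) :=
  flatten [seq nseq (mult W r i l) (alpha i, Some (alpha l))
          | i <- iota 0 m.+1, l <- iota i.+1 (m - i)]
  ++ flatten [seq nseq (mult_inf m W r i) (alpha i, None) | i <- iota 0 m.+1].

End Defs.

(* Main.v *)
Require Import Defs.
From mathcomp Require Import all_boot all_order all_algebra.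
Set Implicit Arguments. Unset Strict Implicit. Unset Printing Implicit Defensive.
Import Order.TTheory GRing.Theory Num.Theory.
Local Open Scope ring_scope.
Lemma kcore_ok_sub (T : finType) (e : rel T) k W :
  kcore_ok e k W -> W \subset kcore e k.
Proof. by move=> H; apply: (bigcup_sup W). Qed.

Lemma kcore_okP (T : finType) (e : rel T) k v :
  v \in kcore e k -> (k <= #|[set u in kcore e k | e v u]|)%N.
Proof.
move=> /bigcupP [W HW vW].
have := HW; move/forallP => /(_ v) /implyP /(_ vW) H.
apply: (leq_trans H); apply: subset_leq_card; apply/subsetP => u.
rewrite !inE => /andP [uW ->]; rewrite andbT.
by move/subsetP: (kcore_ok_sub HW) => /(_ u uW).
Qed.

Lemma clique_core (T : finType) (e : rel T) k s :
  clique e s -> (k.+2 <= #|s|)%N -> s \subset kcore e k.+1.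
Proof.
move=> Hc Hs; apply: kcore_ok_sub; apply/forallP => v; apply/implyP => vs.
have H1 : s :\ v \subset [set u in s | e v u].
  apply/subsetP => u; rewrite !inE => /andP [uv us]; rewrite us /=.
  move/forallP: Hc => /(_ v) /implyP /(_ vs) /forallP /(_ u) /implyP /(_ us).
  by rewrite eq_sym uv.
apply: leq_trans (subset_leq_card H1).
by move: Hs; rewrite (cardsD1 v s) vs.
Qed.

Lemma cycle_core (T : finType) (e : rel T) (F : fieldType) (k r : nat)
  (hk : (1 <= k)%N) (hkr : (k <= r)%N) (u : 'rV[F]_(Nsets T))
  (Hs : forall x, u 0 x != 0 -> (#|sv x| == r.+1) && clique e (sv x))
  (Hc : u *m bd T F = 0) :
  forall x, u 0 x != 0 -> sv x \subset kcore e k.+1.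
Proof.
pose U := kcore e k.+1 :|: \bigcup_(x | u 0 x != 0) sv x.
suff HU : U \subset kcore e k.+1.
  move=> x ux; apply: subset_trans HU; apply/subsetP=> z zs.
  rewrite inE; apply/orP; right; apply/bigcupP; exists x => //.
apply: kcore_ok_sub; apply/forallP => v; apply/implyP.
rewrite inE => /orP [vK | /bigcupP [x ux vx]].
  apply: leq_trans (kcore_okP vK) _; apply: subset_leq_card.
  apply/subsetP => z; rewrite !inE => /andP [zK evz].
  by rewrite evz andbT zK.
have /andP [/eqP Hsz Hcl] := Hs x ux.
set s := sv x in Hsz Hcl vx *.
have Hsv : #|s :\ v| = r by move: Hsz; rewrite (cardsD1 v s) vx add1n => [[]].
have [y ys] : exists y, y \in s :\ v.
  apply/card_gt0P; rewrite Hsv; exact: leq_trans hk hkr.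
move: ys; rewrite !inE => /andP [yv ys].
pose rho := s :\ y.
pose j : 'I_(Nsets T) := enum_rank rho.
have svj : sv j = rho by rewrite /sv /j enum_rankK.
have vrho : v \in rho by rewrite !inE eq_sym yv vx.
have Hdiff : s :\: rho = [set y].
  apply/setP => z; rewrite !inE.
  case: (eqVneq z y) => [-> | zy]; first by rewrite ys.
  by case: (z \in s).
have bdx : bd T F x j != 0.
  rewrite /bd mxE /= svj -/s Hdiff cards1 eqxx /=.
  have -> : rho \subset s by apply: subsetDl.
  have -> : (0 < #|rho|)%N by apply/card_gt0P; exists v.
  by rewrite expf_neq0 // oppr_eq0 oner_eq0.
have [i /andP [ix]] : exists i, (i != x) && (u 0 i * bd T F i j != 0).
  apply/existsP; apply: contraT => /existsPn H.
  have := congr1 (fun M : 'rV[F]_(Nsets T) => M 0 j) Hc; rewrite !mxE (bigD1 x) //= big1 ?addr0.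
    by move/eqP; rewrite (negPf (mulf_neq0 ux bdx)).
  by move=> i ix; move: (H i); rewrite ix /= negbK => /eqP.
rewrite mulf_eq0 negb_or => /andP [ui bdi].
have /andP [_ Hcli] := Hs i ui.
move: bdi; rewrite /bd mxE /= svj.
case: ifP => [/and3P [rt /cards1P [w Hw] _] _ | _]; last by rewrite eqxx.
have : w \in sv i :\: rho by rewrite Hw set11.
rewrite inE => /andP [wrho wt].
have wy : w != y.
  apply/eqP => wy; move: Hw; rewrite wy => Hw.
  have : sv i = s.
    apply/setP => z; apply/idP/idP => zz.
      case: (z =P y) => [-> // | /eqP zy].
      have : z \notin sv i :\: rho by rewrite Hw inE.
      by rewrite inE zz andbT negbK !inE zy.
    case: (z =P y) => [-> | /eqP zy].
      have : y \in sv i :\: rho by rewrite Hw set11.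
      by rewrite inE => /andP [].
    by move/subsetP: rt; apply; rewrite !inE zy.
  by move/enum_val_inj => iEx; rewrite iEx eqxx in ix.
have ws : w \notin s by move: wrho; rewrite !inE wy.
have vt : v \in sv i by move/subsetP: rt; apply.
have evw : e v w.
  move/forallP: Hcli => /(_ v) /implyP /(_ vt) /forallP /(_ w) /implyP /(_ wt).
  have -> // : v != w by apply/eqP => vw; rewrite -vw vx in ws.
have wU : w \in U by rewrite inE; apply/orP; right; apply/bigcupP; exists i.
have Hsub : w |: (s :\ v) \subset [set z in U | e v z].
  apply/subsetP => z; rewrite !inE => /orP [/eqP -> | /andP [zv zs]].
    by rewrite evw andbT; move: wU; rewrite inE.
  apply/andP; split.
    by apply/orP; right; apply/bigcupP; exists x.
  move/forallP: Hcl => /(_ v) /implyP /(_ vx) /forallP /(_ z) /implyP /(_ zs).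
  by rewrite eq_sym zv.
apply: leq_trans (subset_leq_card Hsub).
by rewrite cardsU1 Hsv !inE negb_and ws orbT.
Qed.
Lemma supp_sub (F : fieldType) N (P : pred 'I_N) (u : 'rV[F]_N) :
  (u <= \big[@addsmx F N N N/(0 : 'M[F]_N)]_(x | P x) <<@delta_mx F 1 N ord0 x>>)%MS
  = [forall y, ~~ P y ==> (u 0 y == 0)].
Proof.
apply/idP/forallP.
  move=> /sub_sums_genmxP [u_ ->] y; apply/implyP => nPy.
  rewrite summxE big1 // => i Pi.
  rewrite !mxE big_ord1 mxE.
  have -> : (y == i) = false by apply/negP => /eqP Eyi; rewrite Eyi Pi in nPy.
  by rewrite andbF mulr0.
move=> H; rewrite [u]row_sum_delta.
rewrite (bigID P) /= [X in _ + X]big1 ?addr0; last first.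
  by move=> y nPy; move/implyP: (H y) => /(_ nPy) /eqP ->; rewrite scale0r.
apply: summx_sub => x Px; apply: scalemx_sub.
by apply: (sumsmx_sup x) => //; rewrite genmxE.
Qed.

Lemma sub_sep (T : finType) (s W W' : {set T}) (P : pred T) :
  s \subset W -> s \subset W' ->
  (s \subset [set w in W | P w]) = (s \subset [set w in W' | P w]).
Proof.
move=> /subsetP sW /subsetP sW'; apply/subsetP/subsetP => H z zs.
  by move: (H z zs); rewrite !inE (sW' z zs) => /andP [].
by move: (H z zs); rewrite !inE (sW z zs) => /andP [].
Qed.

Lemma inK_core (T : finType) (e : rel T) (R : realFieldType) (f : T -> R)
  alpha k i (s : {set T}) : s \subset kcore e k ->
  inK e f alpha [set: T] i s = inK e f alpha (kcore e k) i s.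
Proof.
move=> sK; rewrite /inK (@sub_sep _ s [set: T] (kcore e k)) //.
Qed.

Lemma inK_mono (T : finType) (e : rel T) (R : realFieldType) (f : T -> R)
  alpha k i (s : {set T}) : inK e f alpha (kcore e k) i s -> inK e f alpha [set: T] i s.
Proof.
move=> H; have sK' : s \subset kcore e k.
  move: (H) => /and3P [_ sK _].
  by apply: subset_trans sK _; apply/subsetP => z; rewrite inE => /andP [].
by rewrite (@inK_core _ _ _ _ _ k _ _ sK').
Qed.

Theorem theorem1 (T : finType) (e : rel T)
  (e_sym : symmetric e) (e_irr : irreflexive e)
  (e_conn : forall x y : T, connect e x y)
  (F : fieldType) (R : realFieldType) (f : T -> R)
  (m : nat) (alpha : nat -> R)
  (alpha_incr : forall i, (i < m)%N -> alpha i < alpha i.+1)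
  (alpha_min : (forall v, alpha 0%N <= f v) /\ (exists v, f v = alpha 0%N))
  (alpha_max : (forall v, f v <= alpha m) /\ (exists v, f v = alpha m))
  (k : nat) (hk : (1 <= k)%N) :
  forall j : nat, (k <= j)%N ->
    perm_eq (PD e F f alpha m [set: T] j)
            (PD e F f alpha m (kcore e k.+1) j).
Proof.
move=> j hkj.
set K := kcore e k.+1.
have Hb : forall b, chains e F f alpha [set: T] j.+1 b = chains e F f alpha K j.+1 b.
  move=> b; apply: eq_bigl => x.
  case Hx : (#|sv x| == j.+2); rewrite ?andFb ?andTb //.
  case Hc : (clique e (sv x)); last by rewrite /inK Hc !andbF.
  rewrite (@inK_core _ _ _ _ _ k.+1) //; apply: clique_core Hc _; by rewrite (eqP Hx) ltnS.
have Hbd : forall b, bounds e F f alpha [set: T] j b = bounds e F f alpha K j b.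
  by move=> b; rewrite /bounds Hb.
have HcS : forall a, (chains e F f alpha K j a <= chains e F f alpha [set: T] j a)%MS.
  move=> a; apply/sumsmx_subP => x /andP [Hx Px]; apply: (sumsmx_sup x).
    by rewrite Hx (inK_mono Px).
  exact: submx_refl.
have Hcy : forall a, (cycles e F f alpha [set: T] j a == cycles e F f alpha K j a)%MS.
  move=> a; apply/andP; split; last first.
    by apply: capmxS => //; exact: submx_refl.
  rewrite sub_capmx capmxSr andbT; apply/row_subP => i.
  set u := row i _.
  have uT : (u <= chains e F f alpha [set: T] j a)%MS.
    exact: submx_trans (row_sub _ _) (capmxSl _ _).
  have uK : (u <= kermx (bd T F))%MS.
    exact: submx_trans (row_sub _ _) (capmxSr _ _).
  move: uT; rewrite /chains !supp_sub => /forallP uT.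
  have PT : forall x, u 0 x != 0 ->
      (#|sv x| == j.+1) && inK e f alpha [set: T] a (sv x).
    move=> x ux; apply: contraR ux => nP; move/implyP: (uT x); exact.
  have Hcore := @cycle_core T e F k j hk hkj u.
  have Hcore' : forall x, u 0 x != 0 -> sv x \subset K.
    apply: Hcore; last by apply/sub_kermxP.
    move=> x ux; have /andP [-> /and3P [_ _ ->]] := PT x ux; done.
  apply/forallP => y; apply/implyP => nPy; apply: contraR nPy => uy.
  have /andP [-> HK] := PT y uy.
  by rewrite -(@inK_core _ _ _ _ _ k.+1) // Hcore'.
have Hp : forall a b, pbetti e F f alpha [set: T] j a b = pbetti e F f alpha K j a b.
  move=> a b; rewrite /pbetti (eqmx_rank (Hcy a)) Hbd; congr (_ - _)%N.
  apply: eqmx_rank; move/andP: (Hcy a) => [H1 H2].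
  by apply/andP; split; apply: capmxS => //; exact: submx_refl.
have Hpp : forall a b, pbetti_prev e F f alpha [set: T] j a b = pbetti_prev e F f alpha K j a b.
  by move=> [|a] b //=; rewrite Hp.
suff -> : PD e F f alpha m [set: T] j = PD e F f alpha m K j by exact: perm_refl.
rewrite /PD; congr (_ ++ _).
  congr flatten; apply: eq_allpairs => i l.
  by rewrite /mult !Hp !Hpp.
congr flatten; apply: eq_map => i.
by rewrite /mult_inf Hp Hpp.
Qed.
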